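(* Let $n\ge 2$. For $\alpha\in\mathbb{Z}_2^{n-1}$ and a bit $a$, write $\alpha a=(\alpha_0,\dots,\alpha_{n-2},a)\in\mathbb{Z}_2^n$; for $\alpha\in\mathbb{Z}_2^{n-2}$ and bits $a,b$, write $\alpha ab=(\alpha_0,\dots,\alpha_{n-3},a,b)\in\mathbb{Z}_2^n$. Then: (1) for every $\alpha\in\mathbb{Z}_2^{n-1}$, $\max_{\beta,\gamma\in\mathbb{Z}_2^n}\mathrm{adp}^{\mathrm{XR}}_{n-1}(\alpha0,\beta\to\gamma)=\mathrm{adp}^{\mathrm{XR}}_{n-1}(\alpha0,\alpha0\to0)$; (2) for every $\alpha\in\mathbb{Z}_2^{n-2}$, $\max_{\beta,\gamma\in\mathbb{Z}_2^n}\mathrm{adp}^{\mathrm{XR}}_{n-1}(\alpha01,\beta\to\gamma)=\mathrm{adp}^{\mathrm{XR}}_{n-1}(\alpha01,\alpha00\to2^{n-1})$; (3) for every $\alpha\in\mathbb{Z}_2^{n-2}$, $\max_{\beta,\gamma\in\mathbb{Z}_2^n}\mathrm{adp}^{\mathrm{XR}}_{n-1}(\alpha11,\beta\to\gamma)=\mathrm{adp}^{\mathrm{XR}}_{n-1}(\alpha11,\overline{\alpha}00\to2^{n-1})$.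
   Context: For $x\in\mathbb{Z}_2^n$ write $x=(x_0,\dots,x_{n-1})$ and identify $x$ with the integer $\sum_{i=0}^{n-1}x_i2^{n-1-i}$, so $x_0$ is the most significant bit; $x+y$, $x-y$, $-x$ are computed modulo $2^n$; $2^{n-1}$ is the vector $(1,0,\dots,0)$. $\oplus$ is bitwise XOR, $\overline{x}=(x_0\oplus1,\dots,x_{m-1}\oplus1)$ is the bitwise complement, and $x\lll r=(x_r,\dots,x_{n-1},x_0,\dots,x_{r-1})$. For $f:(\mathbb{Z}_2^n)^k\to\mathbb{Z}_2^n$, $\mathrm{adp}^f(\alpha_1,\dots,\alpha_k\to\alpha_{k+1})=2^{-kn}\#\{(x_1,\dots,x_k): f(x_1+\alpha_1,\dots,x_k+\alpha_k)=f(x_1,\dots,x_k)+\alpha_{k+1}\}$. For $1\le r\le n-1$, $\mathrm{adp}^{\mathrm{XR}}_r$ denotes $\mathrm{adp}^f$ for $f(x,y)=(x\oplus y)\lll r$. *)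

(* Defs.v *)
(* Bit vectors of Z_2^n as n-tuples of booleans, x_0 = MSB. *)
From mathcomp Require Import all_boot all_order all_algebra.
Set Implicit Arguments. Unset Strict Implicit. Unset Printing Implicit Defensive.
Import GRing.Theory Num.Theory.

Definition bv (n : nat) := n.-tuple bool.

(* the n-vector whose i-th coordinate is the i-th entry of s (false if absent);
   used for concatenations like alpha a, alpha a b (sizes match exactly when n >= 2) *)
Definition mk (n : nat) (s : seq bool) : bv n := [tuple nth false s i | i < n].

Definition bv2nat (n : nat) (x : bv n) : nat :=
  \sum_(i < n) (tnth x i : nat) * 2 ^ (n.-1 - i).

(* the vector identified with m mod 2^n *)
Definition nat2bv (n : nat) (m : nat) : bv n :=
  [tuple odd (m %/ 2 ^ (n.-1 - i)) | i < n].

Definition bvadd (n : nat) (x y : bv n) : bv n := nat2bv n (bv2nat x + bv2nat y).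

Definition bvxor (n : nat) (x y : bv n) : bv n := [tuple tnth x i (+) tnth y i | i < n].

Definition bvnot (n : nat) (x : bv n) : bv n := [tuple ~~ tnth x i | i < n].

Definition bvrotl (n : nat) (r : nat) (x : bv n) : bv n := mk n (rot r x).

Definition bvzero (n : nat) : bv n := nat2bv n 0.

Definition bvmsb (n : nat) : bv n := nat2bv n (2 ^ n.-1).

Definition adp2 (n : nat) (f : bv n -> bv n -> bv n) (a1 a2 a3 : bv n) : rat :=
  (#|[set p : bv n * bv n |
       f (bvadd p.1 a1) (bvadd p.2 a2) == bvadd (f p.1 p.2) a3]|)%:R
  / (2 ^ (2 * n))%:R.

Definition adpXR (n r : nat) (a1 a2 a3 : bv n) : rat :=
  adp2 (fun x y => bvrotl r (bvxor x y)) a1 a2 a3.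

(* Main.v *)
Require Import Defs.
From mathcomp Require Import all_boot all_order all_algebra.
From mathcomp Require Import zify.
Import Num.Theory GRing.Theory.
Set Implicit Arguments. Unset Strict Implicit. Unset Printing Implicit Defensive.

Fixpoint nxor (m P Q : nat) : nat :=
  if m is m'.+1 then (odd P (+) odd Q) + (nxor m' P./2 Q./2).*2 else 0.

Lemma expn_gt0' k : 0 < 2 ^ k. Proof. by rewrite expn_gt0. Qed.

Lemma half_div2 k : k./2 = k %/ 2.
Proof. by rewrite -divn2. Qed.

Lemma nxor_lt m P Q : nxor m P Q < 2 ^ m.
Proof.
elim: m P Q => [|m IH] P Q //=.
have := IH P./2 Q./2; rewrite expnS -!muln2; case: (odd P (+) odd Q) => /=; lia.
Qed.

Lemma div_half_pow k j : k %/ 2 ^ j.+1 = k./2 %/ 2 ^ j.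
Proof. by rewrite expnS divnMA half_div2. Qed.

Lemma bit_step (b : bool) K j : odd ((b + K.*2) %/ 2 ^ j.+1) = odd (K %/ 2 ^ j).
Proof.
rewrite div_half_pow; congr (odd (_ %/ _)).
by rewrite half_div2 -muln2 addnC divnMDl // divn_small ?addn0 //; case: b.
Qed.

Lemma bit_zero (b : bool) K : odd (b + K.*2) = b.
Proof. by rewrite oddD odd_double addbF oddb. Qed.

Lemma nxor_bit m P Q j : j < m ->
  odd (nxor m P Q %/ 2 ^ j) = odd (P %/ 2 ^ j) (+) odd (Q %/ 2 ^ j).
Proof.
elim: m P Q j => [|m IH] P Q [|j] //= Hj.
  by rewrite !expn0 !divn1 bit_zero.
by rewrite bit_step IH // !div_half_pow.
Qed.

Lemma mod_step k n : k %% 2 ^ n.+1 = odd k + (k./2 %% 2 ^ n).*2.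
Proof.
have lt := ltn_pmod k./2 (expn_gt0' n).
rewrite -{1}(odd_double_half k) {1}(divn_eq k./2 (2^n)).
set q := k./2 %/ 2 ^ n; set r := k./2 %% 2 ^ n.
have -> : odd k + (q * 2 ^ n + r).*2 = q * 2^n.+1 + (odd k + r.*2) by rewrite expnS; lia.
rewrite modnMDl modn_small //; rewrite expnS; case: (odd k) => /=; lia.
Qed.

Lemma bin_mod n k : \sum_(j < n) odd (k %/ 2 ^ j) * 2 ^ j = k %% 2 ^ n.
Proof.
elim: n k => [|n IH] k; first by rewrite big_ord0 expn0 modn1.
rewrite big_ord_recl /= expn0 divn1 muln1.
under eq_bigr => i _ do rewrite /bump /= add1n div_half_pow expnS mulnCA.
by rewrite -big_distrr /= IH mod_step mul2n.
Qed.

Lemma bin_bit n (f : nat -> bool) k : k < n ->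
  odd ((\sum_(j < n) f j * 2 ^ j) %/ 2 ^ k) = f k.
Proof.
elim: n f k => [|n IH] f k // Hk.
rewrite big_ord_recl /= expn0 muln1.
under eq_bigr => i _ do rewrite /bump /= add1n expnS mulnCA.
rewrite -big_distrr /= mul2n.
case: k Hk => [|k] Hk.
  by rewrite expn0 divn1 bit_zero.
by rewrite bit_step (IH (fun i => f i.+1)).
Qed.

Lemma bv2nat_rev n (x : bv n) :
  bv2nat x = \sum_(j < n) nth false x (n.-1 - j) * 2 ^ j.
Proof.
rewrite /bv2nat (reindex_inj rev_ord_inj) /=; apply: eq_bigr => j _.
rewrite (tnth_nth false) /=.
have Hj := ltn_ord j.
have -> : n - j.+1 = n.-1 - j by lia.
by have -> : n.-1 - (n.-1 - j) = j by lia.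
Qed.

Lemma nth_nat2bv n k i : i < n -> nth false (nat2bv n k) i = odd (k %/ 2 ^ (n.-1 - i)).
Proof.
move=> Hi; have := tnth_nth false (nat2bv n k) (Ordinal Hi).
by rewrite tnth_mktuple /= => <-.
Qed.

Lemma nat2bvK n (x : bv n) : nat2bv n (bv2nat x) = x.
Proof.
apply: eq_from_tnth => i; rewrite tnth_mktuple bv2nat_rev.
have Hi := ltn_ord i.
rewrite (bin_bit (fun j => nth false x (n.-1 - j))); last by lia.
rewrite (tnth_nth false); congr nth; lia.
Qed.

Lemma bv2natK n k : bv2nat (nat2bv n k) = k %% 2 ^ n.
Proof.
rewrite bv2nat_rev -bin_mod; apply: eq_bigr => j _.
have Hj := ltn_ord j.
rewrite nth_nat2bv; last by lia.
by have -> : n.-1 - (n.-1 - j) = j by lia.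
Qed.

Lemma bv2nat_lt n (x : bv n) : bv2nat x < 2 ^ n.
Proof. by rewrite -(nat2bvK x) bv2natK ltn_pmod // expn_gt0'. Qed.

Lemma nat2bv_mod n k : nat2bv n (k %% 2 ^ n) = nat2bv n k.
Proof. by rewrite -bv2natK nat2bvK. Qed.

Lemma nat2bv_eq n a b : (nat2bv n a == nat2bv n b) = (a %% 2 ^ n == b %% 2 ^ n).
Proof.
apply/eqP/eqP => [H|H]; first by rewrite -!bv2natK H.
by rewrite -nat2bv_mod H nat2bv_mod.
Qed.

Lemma bvxor_nat n P Q : bvxor (nat2bv n P) (nat2bv n Q) = nat2bv n (nxor n P Q).
Proof.
apply: eq_from_tnth => i; rewrite !tnth_mktuple nxor_bit //.
have := ltn_ord i; lia.
Qed.

Lemma rr_lt n V : 0 < n -> V < 2 ^ n -> V./2 + odd V * 2 ^ n.-1 < 2 ^ n.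
Proof.
case: n => [//|n] _ /=; rewrite expnS => HV.
have := odd_double_half V; case: (odd V) => /=; lia.
Qed.

Lemma bvrot_nat n V : 0 < n -> V < 2 ^ n ->
  bvrotl (n - 1) (nat2bv n V) = nat2bv n (V./2 + odd V * 2 ^ n.-1).
Proof.
move=> Hn HV; apply: eq_from_tnth => i; rewrite !tnth_mktuple.
have Hi := ltn_ord i.
rewrite /rot nth_cat size_drop size_tuple.
have -> : n - (n - 1) = 1 by lia.
case: (posnP i) => [i0|ipos].
  rewrite i0 /= nth_drop addn0 nth_nat2bv; last by lia.
  have -> : n.-1 - (n - 1) = 0 by lia.
  rewrite expn0 divn1.
  have -> : n.-1 - 0 = n.-1 by lia.
  rewrite addnC divnMDl ?expn_gt0' // (divn_small (m := V./2)); first by rewrite addn0 oddb.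
  move: HV; case: n Hn {Hi i i0} => [//|n] _ /=; rewrite expnS.
  have := odd_double_half V; case: (odd V) => /=; lia.
rewrite ltnNge ipos /= nth_take; last by lia.
rewrite nth_nat2bv; last by lia.
have -> : n.-1 - (i - 1) = (n.-1 - i).+1 by lia.
rewrite div_half_pow.
have E : 2 ^ n.-1 = 2 ^ i * 2 ^ (n.-1 - i) by rewrite -expnD; congr (_ ^ _); lia.
rewrite E mulnA addnC divnMDl ?expn_gt0' //.
rewrite oddD oddM oddX /=.
by rewrite orbF (negbTE (lt0n_neq0 ipos)) andbF.
Qed.

Definition maj (a b c : bool) : bool := (a && b) || (c && (a || b)).

Definition Tcond m A B G (c1 c2 c3 e : bool) X Y : bool :=
  (nxor m (X + A + c1) (Y + B + c2) == (nxor m X Y + G + c3) %% 2 ^ m) &&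
  (odd ((nxor m X Y + G + c3) %/ 2 ^ m) == e).

Definition T m A B G c1 c2 c3 e : nat :=
  \sum_(0 <= X < 2 ^ m) \sum_(0 <= Y < 2 ^ m) (Tcond m A B G c1 c2 c3 e X Y : nat).

Definition par A B G (c1 c2 c3 : bool) := odd A (+) c1 (+) odd B (+) c2 (+) odd G (+) c3.

Lemma add3_split (x a c : bool) X A :
  x + X.*2 + (a + A.*2) + c = (x (+) a (+) c) + (X + A + maj x a c).*2.
Proof. by case: x; case: a; case: c => /=; lia. Qed.

Lemma half_bit (b : bool) K : (b + K.*2)./2 = K.
Proof. by case: b => /=; rewrite ?add0n ?add1n ?doubleK ?uphalf_double. Qed.

Lemma eq_bitsplit (b1 b2 : bool) W V : (b1 + W.*2 == b2 + V.*2) = (b1 == b2) && (W == V).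
Proof. by case: b1; case: b2 => /=; lia. Qed.

Lemma Tcond_step m (a b g c1 c2 c3 x y : bool) e A B G X Y :
  Tcond m.+1 (a + A.*2) (b + B.*2) (g + G.*2) c1 c2 c3 e (x + X.*2) (y + Y.*2) =
  ~~ (a (+) c1 (+) b (+) c2 (+) g (+) c3) &&
  Tcond m A B G (maj x a c1) (maj y b c2) (maj (x (+) y) g c3) e X Y.
Proof.
rewrite /Tcond /= !add3_split !bit_zero !half_bit.
rewrite mod_step bit_zero half_bit eq_bitsplit div_half_pow half_bit.
rewrite andbA; congr (_ && _); congr (_ && _).
by case: x; case: y; case: a; case: b; case: g; case: c1; case: c2; case: c3.
Qed.

Lemma sum_split K (F : nat -> nat) :
  \sum_(0 <= X < K.*2) F X =
  \sum_(0 <= X < K) F (false + X.*2) + \sum_(0 <= X < K) F (true + X.*2).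
Proof.
elim: K => [|K IH]; first by rewrite !big_geq.
rewrite doubleS !big_nat_recr //= IH.
have -> : \sum_(0 <= X < K) F (false + X.*2) = \sum_(0 <= i < K) F (0 + i.*2) by [].
have -> : \sum_(0 <= X < K) F (true + X.*2) = \sum_(0 <= i < K) F (1 + i.*2) by [].
rewrite add0n add1n; lia.
Qed.

Lemma sum2_split K (F : nat -> nat -> nat) :
  \sum_(0 <= X < K.*2) \sum_(0 <= Y < K.*2) F X Y =
  \sum_(0 <= X < K) \sum_(0 <= Y < K) F (false + X.*2) (false + Y.*2) +
  \sum_(0 <= X < K) \sum_(0 <= Y < K) F (false + X.*2) (true + Y.*2) +
  \sum_(0 <= X < K) \sum_(0 <= Y < K) F (true + X.*2) (false + Y.*2) +
  \sum_(0 <= X < K) \sum_(0 <= Y < K) F (true + X.*2) (true + Y.*2).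
Proof.
rewrite sum_split.
have E : forall X, \sum_(0 <= Y < K.*2) F X Y =
  \sum_(0 <= Y < K) F X (false + Y.*2) + \sum_(0 <= Y < K) F X (true + Y.*2).
  by move=> X; rewrite sum_split.
rewrite (eq_bigr _ (fun X _ => E (false + X.*2))) (eq_bigr _ (fun X _ => E (true + X.*2))).
rewrite !big_split /=.
by rewrite !addnA.
Qed.

Lemma T_rec' m (a b g c1 c2 c3 : bool) e A B G :
  T m.+1 (a + A.*2) (b + B.*2) (g + G.*2) c1 c2 c3 e =
  if a (+) c1 (+) b (+) c2 (+) g (+) c3 then 0 else
  T m A B G (maj false a c1) (maj false b c2) (maj false g c3) e +
  T m A B G (maj false a c1) (maj true b c2) (maj true g c3) e +
  T m A B G (maj true a c1) (maj false b c2) (maj true g c3) e +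
  T m A B G (maj true a c1) (maj true b c2) (maj false g c3) e.
Proof.
rewrite /T expnS mul2n sum2_split.
have E : forall x y : bool, 
  \sum_(0 <= X < 2 ^ m) \sum_(0 <= Y < 2 ^ m)
     (Tcond m.+1 (a + A.*2) (b + B.*2) (g + G.*2) c1 c2 c3 e (x + X.*2) (y + Y.*2) : nat)
  = ~~ (a (+) c1 (+) b (+) c2 (+) g (+) c3) *
    \sum_(0 <= X < 2 ^ m) \sum_(0 <= Y < 2 ^ m)
     (Tcond m A B G (maj x a c1) (maj y b c2) (maj (x (+) y) g c3) e X Y : nat).
  move=> x y; rewrite big_distrr; apply: eq_bigr => X _.
  rewrite big_distrr; apply: eq_bigr => Y _.
  by rewrite Tcond_step; case: (~~ _); case: (Tcond _ _ _ _ _ _ _ _ _ _).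
rewrite !E /=.
by case: (a (+) c1 (+) b (+) c2 (+) g (+) c3) => /=; rewrite ?mul0n ?mul1n.
Qed.

Lemma T_rec m A B G c1 c2 c3 e :
  T m.+1 A B G c1 c2 c3 e =
  if par A B G c1 c2 c3 then 0 else
  T m A./2 B./2 G./2 (maj false (odd A) c1) (maj false (odd B) c2) (maj false (odd G) c3) e +
  T m A./2 B./2 G./2 (maj false (odd A) c1) (maj true (odd B) c2) (maj true (odd G) c3) e +
  T m A./2 B./2 G./2 (maj true (odd A) c1) (maj false (odd B) c2) (maj true (odd G) c3) e +
  T m A./2 B./2 G./2 (maj true (odd A) c1) (maj true (odd B) c2) (maj false (odd G) c3) e.
Proof.
have := T_rec' m (odd A) (odd B) (odd G) c1 c2 c3 e A./2 B./2 G./2.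
by rewrite !odd_double_half => ->.
Qed.

Fixpoint R m A c : nat :=
  if m is m1.+1 then
    (if m1 is 0 then 4 else
     if odd A == c then 4 * R m1 A./2 c else R m1 A./2 false + R m1 A./2 true)
  else 1.

Lemma R_S m A c : R m.+2 A c =
  if odd A == c then 4 * R m.+1 A./2 c else R m.+1 A./2 false + R m.+1 A./2 true.
Proof. by []. Qed.

Arguments R : simpl never.

Lemma T0_le A B G c1 c2 c3 e : T 0 A B G c1 c2 c3 e <= 1.
Proof. by rewrite /T expn0 !big_nat1; case: (Tcond _ _ _ _ _ _ _ _ _ _). Qed.

Lemma T_par m A B G c1 c2 c3 e : par A B G c1 c2 c3 -> T m.+1 A B G c1 c2 c3 e = 0.
Proof. by rewrite T_rec => ->. Qed.

Lemma majcc x c : maj x c c = c.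
Proof. by case: x; case: c. Qed.

Lemma pair_le m A B G c c2 c3 c2' c3' e :
  (forall c2 c3, T m.+1 A B G c c2 c3 e <= R m.+1 A c) ->
  par A B G c c2 c3 != par A B G c c2' c3' ->
  T m.+1 A B G c c2 c3 e + T m.+1 A B G c c2' c3' e <= R m.+1 A c.
Proof.
move=> H; case Hp: (par A B G c c2 c3) => /= Hp'.
  by rewrite T_par // add0n.
rewrite (@T_par m A B G c c2' c3') ?addn0 //.
by move: Hp'; case: (par A B G c c2' c3').
Qed.

Lemma T_le_R m A B G c1 c2 c3 e : T m A B G c1 c2 c3 e <= R m A c1.
Proof.
elim: m A B G c1 c2 c3 e => [|m IH] A B G c1 c2 c3 e; first exact: T0_le.
rewrite T_rec; case Hp: (par A B G c1 c2 c3) => //.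
case: m IH => [|m] IH.
  have H : forall c1 c2 c3, T 0 A./2 B./2 G./2 c1 c2 c3 e <= 1 by move=> *; exact: IH.
  have E1 : R 1 A c1 = 4 by [].
  rewrite E1.
  have := H (maj false (odd A) c1) (maj false (odd B) c2) (maj false (odd G) c3).
  have := H (maj false (odd A) c1) (maj true (odd B) c2) (maj true (odd G) c3).
  have := H (maj true (odd A) c1) (maj false (odd B) c2) (maj true (odd G) c3).
  have := H (maj true (odd A) c1) (maj true (odd B) c2) (maj false (odd G) c3).
  lia.
rewrite R_S; case: eqP => Ha.
  rewrite Ha !majcc.
  have H := fun c2 c3 => IH A./2 B./2 G./2 c1 c2 c3 e.
  have := H (maj false (odd B) c2) (maj false (odd G) c3).
  have := H (maj true (odd B) c2) (maj true (odd G) c3).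
  have := H (maj false (odd B) c2) (maj true (odd G) c3).
  have := H (maj true (odd B) c2) (maj false (odd G) c3).
  lia.
have Hc : c1 = ~~ odd A by move: Ha; case: (c1); case: (odd A).
have Hbg : odd B (+) c2 (+) odd G (+) c3 = true.
  by move: Hp; rewrite /par Hc; case: (odd A); case: (odd B); case: (c2); case: (odd G); case: (c3).
rewrite Hc.
have -> : maj false (odd A) (~~ odd A) = false by case: (odd A).
have -> : maj true (odd A) (~~ odd A) = true by case: (odd A).
have H1 := @pair_le m A./2 B./2 G./2 false (maj false (odd B) c2) (maj false (odd G) c3)
   (maj true (odd B) c2) (maj true (odd G) c3) e (fun c2 c3 => IH _ _ _ _ c2 c3 e).
have H2 := @pair_le m A./2 B./2 G./2 true (maj false (odd B) c2) (maj true (odd G) c3)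
   (maj true (odd B) c2) (maj false (odd G) c3) e (fun c2 c3 => IH _ _ _ _ c2 c3 e).
have P1 : par A./2 B./2 G./2 false (maj false (odd B) c2) (maj false (odd G) c3) !=
          par A./2 B./2 G./2 false (maj true (odd B) c2) (maj true (odd G) c3).
  by move: Hbg; rewrite /par; case: (odd A./2); case: (odd B./2); case: (odd G./2);
     case: (odd B); case: (c2); case: (odd G); case: (c3).
have P2 : par A./2 B./2 G./2 true (maj false (odd B) c2) (maj true (odd G) c3) !=
          par A./2 B./2 G./2 true (maj true (odd B) c2) (maj false (odd G) c3).
  by move: Hbg; rewrite /par; case: (odd A./2); case: (odd B./2); case: (odd G./2);
     case: (odd B); case: (c2); case: (odd G); case: (c3).
have := H1 P1; have := H2 P2; lia.
Qed.

Lemma R_ratio m A b : 0 < m -> R m A b <= 3 * R m A (~~ b).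
Proof.
elim: m A b => [|m IH] A b // _.
case: m IH => [|m] IH; first by [].
rewrite !R_S.
have h1 := IH A./2 b isT; have h2 := IH A./2 (~~ b) isT; rewrite negbK in h2.
by case: b h1 h2; case: (odd A) => /=; lia.
Qed.

Lemma R_le m A : 0 < m -> R m A (~~ odd A) <= R m A (odd A).
Proof.
case: m => [|m] // _; case: m => [|m]; first by [].
rewrite !R_S eqxx.
have h := @R_ratio m.+1 A./2 (~~ odd A) isT; rewrite negbK in h.
by case: (odd A) h => /=; lia.
Qed.

Lemma T0_ref A B c1 c2 : T 0 A B 0 c1 c2 false false = 1.
Proof. by rewrite /T expn0 !big_nat1 /Tcond. Qed.

Lemma T_ref m A B c c2 d :
  (forall j, j < m -> odd (B %/ 2 ^ j) = odd (A %/ 2 ^ j) (+) d) ->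
  c2 = c (+) d ->
  T m A B 0 c c2 false false = R m A c.
Proof.
elim: m A B c c2 => [|m IH] A B c c2 H Hc2; first by rewrite T0_ref.
have HB0 : odd B = odd A (+) d by have := H 0 isT; rewrite expn0 !divn1.
have H' : forall j, j < m -> odd (B./2 %/ 2 ^ j) = odd (A./2 %/ 2 ^ j) (+) d.
  by move=> j Hj; rewrite -!div_half_pow; apply: H.
rewrite T_rec.
have -> : par A B 0 c c2 false = false.
  by rewrite /par Hc2 HB0; case: (odd A); case: (c); case: (d).
case: m IH H H' => [|m] IH H H'.
  by rewrite !T0_ref.
have Tx : forall x y, T m.+1 A./2 B./2 0 x y false false =
                      if y == x (+) d then R m.+1 A./2 x else 0.
  move=> x y; case: eqP => Hy; first exact: IH.
  apply: T_par; rewrite /par.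
  have := H' 0 isT; rewrite expn0 !divn1 => ->.
  by move: Hy; case: (odd A./2); case: (x); case: (y); case: (d).
rewrite !Tx R_S Hc2 HB0.
case: (odd A); case: (c); case: (d); rewrite /maj /=; lia.
Qed.

Lemma sum_bv n (F : bv n -> nat) :
  \sum_(x : bv n) F x = \sum_(0 <= k < 2 ^ n) F (nat2bv n k).
Proof.
rewrite big_mkord (reindex (fun k : 'I_(2^n) => nat2bv n k)) //=.
apply: onW_bij; exists (fun x => Ordinal (bv2nat_lt x)) => [k|x].
  by apply: val_inj => /=; rewrite bv2natK modn_small.
exact: nat2bvK.
Qed.

Lemma card_pairs n (P : bv n -> bv n -> bool) :
  #|[set p : bv n * bv n | P p.1 p.2]| =
  \sum_(0 <= X < 2 ^ n) \sum_(0 <= Y < 2 ^ n) (P (nat2bv n X) (nat2bv n Y) : nat).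
Proof.
rewrite -sum1dep_card big_mkcond /=.
rewrite -(pair_bigA _ (fun x y => if P x y then 1 else 0)) /= sum_bv.
apply: eq_bigr => X _; rewrite sum_bv; apply: eq_bigr => Y _.
by case: (P _ _).
Qed.

Definition rr n V := V./2 + odd V * 2 ^ n.-1.

Lemma cond_nat n (al be ga : bv n) X Y : 0 < n -> X < 2 ^ n -> Y < 2 ^ n ->
  (bvrotl (n - 1) (bvxor (bvadd (nat2bv n X) al) (bvadd (nat2bv n Y) be)) ==
   bvadd (bvrotl (n - 1) (bvxor (nat2bv n X) (nat2bv n Y))) ga) =
  (rr n (nxor n (X + bv2nat al) (Y + bv2nat be)) == (rr n (nxor n X Y) + bv2nat ga) %% 2 ^ n).
Proof.
move=> Hn HX HY.
rewrite /bvadd !bv2natK !(modn_small HX) !(modn_small HY) !bvxor_nat !bvrot_nat ?nxor_lt //.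
rewrite nat2bv_eq bv2natK modnDml modn_small // rr_lt // nxor_lt.
by [].
Qed.

Lemma nxor_S m (b1 b2 : bool) W1 W2 :
  nxor m.+1 (b1 + W1.*2) (b2 + W2.*2) = (b1 (+) b2) + (nxor m W1 W2).*2.
Proof. by rewrite /= !bit_zero !half_bit. Qed.

Lemma rr_S m (b : bool) K : rr m.+1 (b + K.*2) = K + b * 2 ^ m.
Proof. by rewrite /rr bit_zero half_bit. Qed.

Lemma mod_top K m : K %% 2 ^ m.+1 = K %% 2 ^ m + odd (K %/ 2 ^ m) * 2 ^ m.
Proof.
have lt := ltn_pmod K (expn_gt0' m).
rewrite {1}(divn_eq K (2 ^ m)) -{1}(odd_double_half (K %/ 2 ^ m)).
set q := (K %/ 2 ^ m)./2; set o := odd (K %/ 2 ^ m); set r := K %% 2 ^ m.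
have -> : (o + q.*2) * 2 ^ m + r = q * 2 ^ m.+1 + (r + o * 2 ^ m) by rewrite expnS; lia.
rewrite modnMDl modn_small // expnS; case: o => /=; lia.
Qed.

Lemma top_eq m W (b : bool) K : W < 2 ^ m ->
  (W + b * 2 ^ m == K %% 2 ^ m.+1) = (W == K %% 2 ^ m) && (b == odd (K %/ 2 ^ m)).
Proof.
move=> HW; rewrite mod_top.
have := ltn_pmod K (expn_gt0' m).
case: b; case: (odd _) => /= H; apply/eqP/andP; try lia; 
  move=> [/eqP H1 H2] //; lia.
Qed.

Lemma cond_split m (x0 y0 a0 b0 g : bool) X Y A B G :
  (rr m.+1 (nxor m.+1 (x0 + X.*2 + (a0 + A.*2)) (y0 + Y.*2 + (b0 + B.*2))) ==
   (rr m.+1 (nxor m.+1 (x0 + X.*2) (y0 + Y.*2)) + (G + g * 2 ^ m)) %% 2 ^ m.+1)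
  = Tcond m A B G (x0 && a0) (y0 && b0) false (a0 (+) b0 (+) g) X Y.
Proof.
have E1 : x0 + X.*2 + (a0 + A.*2) = (x0 (+) a0) + (X + A + (x0 && a0)).*2.
  by case: x0; case: a0 => /=; lia.
have E2 : y0 + Y.*2 + (b0 + B.*2) = (y0 (+) b0) + (Y + B + (y0 && b0)).*2.
  by case: y0; case: b0 => /=; lia.
rewrite E1 E2 !nxor_S !rr_S.
set Z := nxor m X Y.
have -> : Z + (x0 (+) y0) * 2 ^ m + (G + g * 2 ^ m) = ((x0 (+) y0) + g) * 2 ^ m + (Z + G).
  by lia.
rewrite top_eq ?nxor_lt // modnMDl divnMDl ?expn_gt0' // /Tcond addn0.
congr (_ && _).
rewrite !oddD !oddb.
by case: (x0); case: (y0); case: (a0); case: (b0); case: (g); case: (odd _).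
Qed.

Lemma cond_split' m (x0 y0 : bool) X Y Av Bv Gv : Gv < 2 ^ m.+1 ->
  (rr m.+1 (nxor m.+1 (x0 + X.*2 + Av) (y0 + Y.*2 + Bv)) ==
   (rr m.+1 (nxor m.+1 (x0 + X.*2) (y0 + Y.*2)) + Gv) %% 2 ^ m.+1)
  = Tcond m Av./2 Bv./2 (Gv %% 2 ^ m) (x0 && odd Av) (y0 && odd Bv) false
      (odd Av (+) odd Bv (+) odd (Gv %/ 2 ^ m)) X Y.
Proof.
move=> HG.
have := cond_split m x0 y0 (odd Av) (odd Bv) (odd (Gv %/ 2 ^ m)) X Y Av./2 Bv./2 (Gv %% 2 ^ m).
rewrite !odd_double_half -mod_top (modn_small HG) //.
Qed.

Lemma card_S m (al be ga : bv m.+1) :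
  #|[set p : bv m.+1 * bv m.+1 | bvrotl (m.+1 - 1) (bvxor (bvadd p.1 al) (bvadd p.2 be))
        == bvadd (bvrotl (m.+1 - 1) (bvxor p.1 p.2)) ga]| =
  let Av := bv2nat al in let Bv := bv2nat be in let Gv := bv2nat ga in
  let e := odd Av (+) odd Bv (+) odd (Gv %/ 2 ^ m) in
  T m Av./2 Bv./2 (Gv %% 2 ^ m) false false false e +
  T m Av./2 Bv./2 (Gv %% 2 ^ m) false (odd Bv) false e +
  T m Av./2 Bv./2 (Gv %% 2 ^ m) (odd Av) false false e +
  T m Av./2 Bv./2 (Gv %% 2 ^ m) (odd Av) (odd Bv) false e.
Proof.
rewrite (card_pairs (fun x y => bvrotl (m.+1 - 1) (bvxor (bvadd x al) (bvadd y be))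
        == bvadd (bvrotl (m.+1 - 1) (bvxor x y)) ga)).
rewrite (eq_big_nat _ _ (F2 := fun X => \sum_(0 <= Y < 2 ^ m.+1)
   (rr m.+1 (nxor m.+1 (X + bv2nat al) (Y + bv2nat be)) ==
    (rr m.+1 (nxor m.+1 X Y) + bv2nat ga) %% 2 ^ m.+1 : nat))); last first.
  move=> X /andP [_ HX]; apply: eq_big_nat => Y /andP [_ HY].
  by rewrite cond_nat.
rewrite expnS mul2n sum2_split -mul2n -expnS.
have HG := bv2nat_lt ga.
rewrite /T.
congr (_ + _ + _ + _); apply: eq_bigr => X _; apply: eq_bigr => Y _;
  by rewrite cond_split'.
Qed.

Lemma bit_bv n (x : bv n) j : j < n -> odd (bv2nat x %/ 2 ^ j) = nth false x (n.-1 - j).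
Proof.
move=> Hj; rewrite bv2nat_rev (bin_bit (fun j => nth false x (n.-1 - j))) //.
Qed.

Lemma nth_mk n s i : i < n -> nth false (mk n s) i = nth false s i.
Proof.
move=> Hi; have := tnth_nth false (mk n s) (Ordinal Hi).
by rewrite tnth_mktuple /= => <-.
Qed.

Lemma nth_bvnot n (x : bv n) i : i < n -> nth false (bvnot x) i = ~~ nth false x i.
Proof.
move=> Hi; have := tnth_nth false (bvnot x) (Ordinal Hi).
by rewrite tnth_mktuple /= => <-; rewrite (tnth_nth false).
Qed.

Lemma R_max m A x : 0 < m -> R m A x <= R m A (odd A).
Proof.
move=> Hm; case: (eqVneq x (odd A)) => [->//|Hx].
have -> : x = ~~ odd A by move: Hx; case: (x); case: (odd A).
exact: R_le.
Qed.

Lemma pair_c1 m A B G c2 c3 e :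
  T m.+1 A B G false c2 c3 e + T m.+1 A B G true c2 c3 e <= R m.+1 A (odd A).
Proof.
case Hp: (par A B G false c2 c3).
  rewrite T_par // add0n; apply: leq_trans (T_le_R _ _ _ _ _ _ _ _) _; exact: R_max.
rewrite (@T_par m A B G true c2 c3) ?addn0.
  apply: leq_trans (T_le_R _ _ _ _ _ _ _ _) _; exact: R_max.
by move: Hp; rewrite /par; case: (odd A); case: (odd B); case: (c2); case: (odd G); case: (c3).
Qed.

Lemma adp_mono n r (a1 a2 a3 b1 b2 b3 : bv n) :
  (#|[set p : bv n * bv n | bvrotl r (bvxor (bvadd p.1 a1) (bvadd p.2 a2))
        == bvadd (bvrotl r (bvxor p.1 p.2)) a3]| <=
   #|[set p : bv n * bv n | bvrotl r (bvxor (bvadd p.1 b1) (bvadd p.2 b2))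
        == bvadd (bvrotl r (bvxor p.1 p.2)) b3]|)%N ->
  (adpXR r a1 a2 a3 <= adpXR r b1 b2 b3)%R.
Proof.
move=> H; rewrite /adpXR /adp2.
apply: ler_wpM2r; first by rewrite invr_ge0 ler0n.
by rewrite ler_nat.
Qed.

Lemma case1 m (alpha : bv (m.+2 - 1)) (beta gamma : bv m.+2) :
  (#|[set p : bv m.+2 * bv m.+2 | bvrotl (m.+2 - 1) (bvxor (bvadd p.1 (mk m.+2 (rcons alpha false))) (bvadd p.2 beta))
        == bvadd (bvrotl (m.+2 - 1) (bvxor p.1 p.2)) gamma]| <=
   #|[set p : bv m.+2 * bv m.+2 | bvrotl (m.+2 - 1) (bvxor (bvadd p.1 (mk m.+2 (rcons alpha false))) (bvadd p.2 (mk m.+2 (rcons alpha false))))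
        == bvadd (bvrotl (m.+2 - 1) (bvxor p.1 p.2)) (bvzero m.+2)]|)%N.
Proof.
rewrite !card_S; cbv zeta.
set Av := bv2nat (mk m.+2 (rcons alpha false)).
have Ha0 : odd Av = false.
  rewrite -[Av]divn1 -(expn0 2) /Av bit_bv // nth_mk // nth_rcons size_tuple.
  by rewrite ltnn eqxx.
have Gz : bv2nat (bvzero m.+2) = 0 by rewrite /bvzero bv2natK mod0n.
rewrite Gz Ha0 div0n mod0n /=.
have TR : forall c, T m.+1 Av./2 Av./2 0 c c false false = R m.+1 Av./2 c.
  by move=> c; apply: (T_ref (d := false)) => [j _|]; rewrite addbF.
rewrite !TR.
by apply: leq_add; [apply: leq_add; [apply: leq_add|]|]; exact: T_le_R.
Qed.

Lemma Gm_val m : bv2nat (bvmsb m.+2) = 2 ^ m.+1.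
Proof. by rewrite /bvmsb bv2natK modn_small // ltn_exp2l. Qed.

Lemma case2 m (alpha : bv (m.+2 - 2)) (beta gamma : bv m.+2) :
  (#|[set p : bv m.+2 * bv m.+2 | bvrotl (m.+2 - 1) (bvxor (bvadd p.1 (mk m.+2 (alpha ++ [:: false; true]))) (bvadd p.2 beta))
        == bvadd (bvrotl (m.+2 - 1) (bvxor p.1 p.2)) gamma]| <=
   #|[set p : bv m.+2 * bv m.+2 | bvrotl (m.+2 - 1) (bvxor (bvadd p.1 (mk m.+2 (alpha ++ [:: false; true]))) (bvadd p.2 (mk m.+2 (alpha ++ [:: false; false]))))
        == bvadd (bvrotl (m.+2 - 1) (bvxor p.1 p.2)) (bvmsb m.+2)]|)%N.
Proof.
have Hs : size alpha = m by rewrite size_tuple; lia.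
rewrite !card_S; cbv zeta.
set Av := bv2nat (mk m.+2 (alpha ++ [:: false; true])).
set Bv := bv2nat (mk m.+2 (alpha ++ [:: false; false])).
have Ha0 : odd Av = true.
  rewrite -[Av]divn1 -(expn0 2) /Av bit_bv // nth_mk // nth_cat Hs ltnNge leqnSn /=.
  by have -> : m.+1 - 0 - m = 1 by lia.
have Hb0 : odd Bv = false.
  rewrite -[Bv]divn1 -(expn0 2) /Bv bit_bv // nth_mk // nth_cat Hs ltnNge leqnSn /=.
  by have -> : m.+1 - 0 - m = 1 by lia.
have Hbits : forall j, j < m.+1 -> odd (Bv./2 %/ 2 ^ j) = odd (Av./2 %/ 2 ^ j) (+) false.
  move=> j Hj; rewrite addbF -!div_half_pow /Av /Bv !bit_bv // !nth_mk; try lia.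
  rewrite !nth_cat Hs; case: ifP => // H.
  by have -> : m.+2.-1 - j.+1 - m = 0 by move: H; lia.
have Ha1 : odd Av./2 = false.
  rewrite -[Av./2]divn1 -(expn0 2) -div_half_pow /Av bit_bv //.
  rewrite nth_mk; last lia.
  have -> : m.+2.-1 - 1 = m by lia.
  by rewrite nth_cat Hs ltnn subnn.
have Hb1 : odd Bv./2 = false.
  by have := Hbits 0 isT; rewrite expn0 !divn1 Ha1.
rewrite Gm_val modnn divnn expn_gt0 /= Ha0 Hb0.
rewrite (@T_ref m.+1 Av./2 Bv./2 false false false Hbits) //.
rewrite (@T_par m Av./2 Bv./2 0 true false false); last by rewrite /par Ha1 Hb1.
set B' := (bv2nat beta)./2; set G' := bv2nat gamma %% 2 ^ m.+1.
set e := (_ (+) _ (+) odd (bv2nat gamma %/ _)).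
have P1 := pair_c1 m Av./2 B' G' false false e.
have P2 := pair_c1 m Av./2 B' G' (odd (bv2nat beta)) false e.
rewrite Ha1 in P1 P2.
lia.
Qed.

Lemma case3 m (alpha : bv (m.+2 - 2)) (beta gamma : bv m.+2) :
  (#|[set p : bv m.+2 * bv m.+2 | bvrotl (m.+2 - 1) (bvxor (bvadd p.1 (mk m.+2 (alpha ++ [:: true; true]))) (bvadd p.2 beta))
        == bvadd (bvrotl (m.+2 - 1) (bvxor p.1 p.2)) gamma]| <=
   #|[set p : bv m.+2 * bv m.+2 | bvrotl (m.+2 - 1) (bvxor (bvadd p.1 (mk m.+2 (alpha ++ [:: true; true]))) (bvadd p.2 (mk m.+2 (bvnot alpha ++ [:: false; false]))))
        == bvadd (bvrotl (m.+2 - 1) (bvxor p.1 p.2)) (bvmsb m.+2)]|)%N.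
Proof.
have Hs : size alpha = m by rewrite size_tuple; lia.
have Hs' : size (bvnot alpha) = m by rewrite size_tuple; lia.
rewrite !card_S; cbv zeta.
set Av := bv2nat (mk m.+2 (alpha ++ [:: true; true])).
set Bv := bv2nat (mk m.+2 (bvnot alpha ++ [:: false; false])).
have Ha0 : odd Av = true.
  rewrite -[Av]divn1 -(expn0 2) /Av bit_bv // nth_mk // nth_cat Hs ltnNge leqnSn /=.
  by have -> : m.+1 - 0 - m = 1 by lia.
have Hb0 : odd Bv = false.
  rewrite -[Bv]divn1 -(expn0 2) /Bv bit_bv // nth_mk // nth_cat Hs' ltnNge leqnSn /=.
  by have -> : m.+1 - 0 - m = 1 by lia.
have Hbits : forall j, j < m.+1 -> odd (Bv./2 %/ 2 ^ j) = odd (Av./2 %/ 2 ^ j) (+) true.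
  move=> j Hj; rewrite addbT -!div_half_pow /Av /Bv !bit_bv // !nth_mk; try lia.
  rewrite !nth_cat Hs Hs'; case: ifP => H.
    rewrite nth_bvnot //; lia.
  by have -> : m.+2.-1 - j.+1 - m = 0 by move: H; lia.
have Ha1 : odd Av./2 = true.
  rewrite -[Av./2]divn1 -(expn0 2) -div_half_pow /Av bit_bv //.
  rewrite nth_mk; last lia.
  have -> : m.+2.-1 - 1 = m by lia.
  by rewrite nth_cat Hs ltnn subnn.
have Hb1 : odd Bv./2 = false.
  by have := Hbits 0 isT; rewrite expn0 !divn1 Ha1.
rewrite Gm_val modnn divnn expn_gt0 /= Ha0 Hb0.
rewrite (@T_ref m.+1 Av./2 Bv./2 true false true Hbits) //.
rewrite (@T_par m Av./2 Bv./2 0 false false false); last by rewrite /par Ha1 Hb1.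
set B' := (bv2nat beta)./2; set G' := bv2nat gamma %% 2 ^ m.+1.
set e := (_ (+) _ (+) odd (bv2nat gamma %/ _)).
have P1 := pair_c1 m Av./2 B' G' false false e.
have P2 := pair_c1 m Av./2 B' G' (odd (bv2nat beta)) false e.
rewrite Ha1 in P1 P2.
lia.
Qed.

Unset Implicit Arguments.
Local Open Scope ring_scope.

Theorem theorem7 (n : nat) (hn : (2 <= n)%N) :
  (forall (alpha : bv (n - 1)) (beta gamma : bv n),
     adpXR (n - 1) (mk n (rcons alpha false)) beta gamma
     <= adpXR (n - 1) (mk n (rcons alpha false)) (mk n (rcons alpha false)) (bvzero n))
  /\
  (forall (alpha : bv (n - 2)) (beta gamma : bv n),
     adpXR (n - 1) (mk n (alpha ++ [:: false; true])) beta gamma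
     <= adpXR (n - 1) (mk n (alpha ++ [:: false; true]))
                      (mk n (alpha ++ [:: false; false])) (bvmsb n))
  /\
  (forall (alpha : bv (n - 2)) (beta gamma : bv n),
     adpXR (n - 1) (mk n (alpha ++ [:: true; true])) beta gamma
     <= adpXR (n - 1) (mk n (alpha ++ [:: true; true]))
                      (mk n (bvnot alpha ++ [:: false; false])) (bvmsb n)).
Proof.
case: n hn => [|[|m]] // _.
split; [|split] => alpha beta gamma; apply: adp_mono.
- exact: case1.
- exact: case2.
- exact: case3.
Qed.
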